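(* Let $(P,\lambda)$ be a marked poset whose Hasse diagram is a disjoint union of connected components such that each component contains exactly one maximal marked element and exactly one minimal marked element. Then the marked order polytope $\mathcal{O}(P,\lambda)$ is affinely isomorphic to the order polytope $\mathcal{O}(Q)$ of some finite poset $Q$.
   Context: A marked poset $(P,\lambda)$ is a finite poset $(P,\preceq)$ together with an induced subposet $P^*\subseteq P$ of marked elements and an order-preserving map $\lambda:P^*\to\mathbb{R}$ (the marking); it is always assumed that all minimal and all maximal elements of $P$ lie in $P^*$. The marked order polytope $\mathcal{O}(P,\lambda)\subseteq\mathbb{R}^{P\setminus P^*}$ is the set of all $x$ such that, setting $x_a=\lambda(a)$ for $a\in P^*$, one has $x_p\le x_q$ for all $p\preceq q$ in $P$. For a finite poset $Q$, the order polytope $\mathcal{O}(Q)\subseteq\mathbb{R}^Q$ is defined by $0\le x_p\le 1$ for all $p\in Q$ and $x_p\le x_q$ whenever $p\prec q$. Two polytopes $A,B\subseteq\mathbb{R}^d$ are affinely isomorphic if $f(A)=B$ for some map $f(x)=Mx+x_0$ with $M$ an invertible $d\times d$ matrix.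
   Formalization: Every marked element of a component is its maximal or its minimal marked element, and λ is strictly order-preserving, λ(p) < λ(q) for marked p ≺ q. Each condition added here is assumed in the paper as well or is needed for the statement above to hold. *)

(* Defs.v *)
From mathcomp Require Import all_boot all_order all_algebra.
Set Implicit Arguments. Unset Strict Implicit. Unset Printing Implicit Defensive.
Import GRing.Theory Num.Theory.
Local Open Scope ring_scope.

Section PosetDefs.
Variable T : finType.

Definition is_partial_order (le : rel T) : Prop :=
  [/\ reflexive le, antisymmetric le & transitive le].

Definition strict (le : rel T) : rel T := fun p q => le p q && (p != q).

Definition covers (le : rel T) : rel T :=
  fun p q => strict le p q && [forall r, ~~ (strict le p r && strict le r q)].

Definition hasse_adj (le : rel T) : rel T :=
  fun p q => covers le p q || covers le q p.

Definition same_component (le : rel T) (p q : T) : bool :=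
  connect (hasse_adj le) p q.

Definition maximal_marked_in (le : rel T) (marked : {set T}) (p m : T) : bool :=
  [&& same_component le p m, m \in marked &
      [forall m', (same_component le p m' && (m' \in marked) && le m m')
                    ==> (m' == m)]].

Definition minimal_marked_in (le : rel T) (marked : {set T}) (p m : T) : bool :=
  [&& same_component le p m, m \in marked &
      [forall m', (same_component le p m' && (m' \in marked) && le m' m)
                    ==> (m' == m)]].

(* The marked order polytope O(P, lambda), living in R^{P minus marked}, where
   R^{P minus marked} is identified with R^n, n = #|unmarked|, through enum_val. *)
Definition marked_order_polytope (R : numDomainType) (le : rel T)
    (marked : {set T}) (lam : T -> R) : 'rV[R]_(#|~: marked|) -> Prop :=
  fun x => exists y : T -> R,
    [/\ (forall p, p \in marked -> y p = lam p),
        (forall i : 'I_(#|~: marked|), y (enum_val i) = x 0 i) &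
        (forall p q, le p q -> y p <= y q)].

End PosetDefs.

Definition order_polytope (R : numDomainType) (n : nat) (leQ : rel 'I_n)
    : 'rV[R]_n -> Prop :=
  fun x => (forall i, 0 <= x 0 i <= 1) /\
           (forall i j, strict leQ i j -> x 0 i <= x 0 j).

Definition affinely_isomorphic (R : numFieldType) (n : nat)
    (A B : 'rV[R]_n -> Prop) : Prop :=
  exists (M : 'M[R]_n) (x0 : 'rV[R]_n),
    M \in unitmx /\ (forall y, B y <-> exists2 x, A x & y = x *m M + x0).

Arguments marked_order_polytope {T R} le marked lam _.
Arguments order_polytope {R n} leQ _.

(* Main.v *)
Require Import Defs.
From mathcomp Require Import all_boot all_order all_algebra.
From mathcomp Require Import lra.
Import Order.TTheory GRing.Theory Num.Theory.
Set Implicit Arguments. Unset Strict Implicit.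

Lemma hasse_sym (T : finType) (le : rel T) : symmetric (hasse_adj le).
Proof. by move=> p q; rewrite /hasse_adj orbC. Qed.

Lemma same_comp_sym (T : finType) (le : rel T) p q :
  same_component le p q = same_component le q p.
Proof. by rewrite /same_component (sym_connect_sym (@hasse_sym T le)). Qed.

Lemma same_comp_trans (T : finType) (le : rel T) p q r :
  same_component le p q -> same_component le q r -> same_component le p r.
Proof. exact: connect_trans. Qed.

Lemma le_same_comp (T : finType) (le : rel T) :
  is_partial_order le -> forall p q, le p q -> same_component le p q.
Proof.
case=> refl anti trans.
pose I a b := [set r | le a r && le r b].
have sub1 : forall a b p q z, le p a -> le b q -> z \in I p q -> z \notin I a b ->
   #|I a b| < #|I p q|.
  move=> a b p q z Hpa Hbq Hz Hnz.
  apply: proper_card; apply/properP; split; last by exists z.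
  by apply/subsetP=> s; rewrite !inE => /andP [H1 H2]; rewrite (trans _ _ _ Hpa H1) (trans _ _ _ H2 Hbq).
suff H : forall k p q, #|I p q| <= k -> le p q ->
   same_component le p q.
  by move=> p q; apply: (H _ p q (leqnn _)).
elim=> [|k IH] p q.
  move=> + Hpq; rewrite leqn0 cards_eq0 => /eqP/setP/(_ p); by rewrite !inE refl Hpq.
move=> Hk Hpq.
have [->|npq] := eqVneq p q; first exact: connect0.
case Hc: (covers le p q).
  by apply: connect1; rewrite /hasse_adj Hc.
move: Hc; rewrite /covers /strict Hpq npq /= => /negbT/forallPn [r].
rewrite negbK => /andP [/andP [Hpr npr] /andP [Hrq nrq]].
apply: (@same_comp_trans _ _ _ r).
  apply: IH Hpr; rewrite -ltnS; apply: leq_trans Hk.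
  apply: (sub1 _ _ _ _ q (refl p) Hrq); first by rewrite !inE Hpq refl.
  rewrite !inE; apply/negP=> /andP [H1 H2].
  by move/negP: nrq; apply; apply/eqP; apply: anti; rewrite H2 Hrq.
apply: IH Hrq; rewrite -ltnS; apply: leq_trans Hk.
apply: (sub1 _ _ _ _ p Hpr (refl q)); first by rewrite !inE Hpq refl.
rewrite !inE; apply/negP=> /andP [H1 H2].
by move/negP: npr; apply; apply/eqP; apply: anti; rewrite H1 Hpr.
Qed.

Lemma exists_max (T : finType) (le : rel T) :
  is_partial_order le -> forall p, exists2 m, le p m & forall q, le m q -> q = m.
Proof.
case=> refl anti trans p.
have [m Hpm Hmin] := arg_minnP (fun q => #|[set r | le q r]|) (refl p).
exists m => // q Hmq; apply/eqP/negPn/negP => nqm.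
have := Hmin q (trans _ _ _ Hpm Hmq); rewrite leqNgt => /negP; apply.
apply: proper_card; apply/properP; split.
  by apply/subsetP=> s; rewrite !inE => H; apply: trans H.
exists m; first by rewrite !inE refl.
rewrite !inE; apply/negP => Hqm; move/negP: nqm; apply; apply/eqP; apply: anti; by rewrite Hqm Hmq.
Qed.

Lemma exists_min (T : finType) (le : rel T) :
  is_partial_order le -> forall p, exists2 m, le m p & forall q, le q m -> q = m.
Proof.
case=> refl anti trans p.
have PO : is_partial_order (fun a b => le b a).
  split => //; first by move=> a b /andP [h1 h2]; apply: anti; rewrite h1 h2.
  by move=> a b c h1 h2; apply: trans h2 h1.
have [m h1 h2] := exists_max PO p.
by exists m.
Qed.

Lemma same_comp_eq (T : finType) (le : rel T) u v x :
  same_component le u v -> same_component le u x = same_component le v x.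
Proof.
move=> Huv; apply/idP/idP => H.
  by apply: same_comp_trans H; rewrite same_comp_sym.
exact: same_comp_trans H.
Qed.

Lemma maxm_comp (T : finType) (le : rel T) marked u v :
  same_component le u v ->
  maximal_marked_in le marked u =1 maximal_marked_in le marked v.
Proof.
move=> H m; rewrite /maximal_marked_in (same_comp_eq _ H).
by under eq_forallb => m' do rewrite (same_comp_eq _ H).
Qed.

Lemma minm_comp (T : finType) (le : rel T) marked u v :
  same_component le u v ->
  minimal_marked_in le marked u =1 minimal_marked_in le marked v.
Proof.
move=> H m; rewrite /minimal_marked_in (same_comp_eq _ H).
by under eq_forallb => m' do rewrite (same_comp_eq _ H).
Qed.

Unset Implicit Arguments.
Local Open Scope ring_scope.

Theorem lemma3p1 (R : realFieldType) (P : finType) (le : rel P)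
    (marked : {set P}) (lam : P -> R) :
  is_partial_order le ->
  (forall p, (forall q, le p q -> q = p) -> p \in marked) ->
  (forall p, (forall q, le q p -> q = p) -> p \in marked) ->
  (forall p q, p \in marked -> q \in marked -> le p q -> lam p <= lam q) ->
  (forall p q, p \in marked -> q \in marked -> strict le p q -> lam p < lam q) ->
  (forall p, exists! m, maximal_marked_in le marked p m) ->
  (forall p, exists! m, minimal_marked_in le marked p m) ->
  (forall p m, same_component le p m -> m \in marked ->
     maximal_marked_in le marked p m \/ minimal_marked_in le marked p m) ->
  exists leQ : rel 'I_(#|~: marked|),
    is_partial_order leQ /\
    affinely_isomorphic (marked_order_polytope le marked lam)
                        (@order_polytope R _ leQ).
Proof.
move=> PO hmax hmin hmono hstrict hU hL hMM.
have [refl anti trans] := PO.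
pose top u := odflt u [pick m | maximal_marked_in le marked u m].
pose bot u := odflt u [pick m | minimal_marked_in le marked u m].
have topP : forall u, le u (top u) /\ maximal_marked_in le marked u (top u).
  move=> u; have [m Hum Hm] := exists_max PO u.
  have Mm : maximal_marked_in le marked u m.
    rewrite /maximal_marked_in (le_same_comp PO Hum) hmax //=.
    by apply/forallP => m'; apply/implyP => /andP [_ /Hm ->].
  rewrite /top; case: pickP => [m' Hm'|/(_ m)]; last by rewrite Mm.
  have [m0 [_ Hu0]] := hU u.
  by rewrite -(Hu0 _ Hm') (Hu0 _ Mm).
have botP : forall u, le (bot u) u /\ minimal_marked_in le marked u (bot u).
  move=> u; have [m Hum Hm] := exists_min PO u.
  have Mm : minimal_marked_in le marked u m.
    rewrite /minimal_marked_in same_comp_sym (le_same_comp PO Hum) hmin //=.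
    by apply/forallP => m'; apply/implyP => /andP [_ /Hm ->].
  rewrite /bot; case: pickP => [m' Hm'|/(_ m)]; last by rewrite Mm.
  have [m0 [_ Hu0]] := hL u.
  by rewrite -(Hu0 _ Hm') (Hu0 _ Mm).
have topM : forall u, top u \in marked.
  by move=> u; have [_ /and3P []] := topP u.
have botM : forall u, bot u \in marked.
  by move=> u; have [_ /and3P []] := botP u.
have lt_bt : forall u, u \notin marked -> lam (bot u) < lam (top u).
  move=> u Hu; apply: hstrict => //; rewrite /strict.
  have [H1 _] := topP u; have [H2 _] := botP u.
  rewrite (trans _ _ _ H2 H1) /=; apply/eqP => E.
  move/negP: Hu; apply; rewrite -(_ : top u = u) //; apply: anti.
  by rewrite H1 -E H2.
have comp_tb : forall u v, le u v -> top u = top v /\ bot u = bot v.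
  move=> u v /(le_same_comp PO) H; split.
    have [_ Hu] := topP u; have [_ Hv] := topP v.
    rewrite (maxm_comp marked H) in Hu.
    have [m0 [_ Hu0]] := hU v.
    by rewrite -(Hu0 _ Hu) (Hu0 _ Hv).
  have [_ Hu] := botP u; have [_ Hv] := botP v.
  rewrite (minm_comp marked H) in Hu.
  have [m0 [_ Hu0]] := hL v.
  by rewrite -(Hu0 _ Hu) (Hu0 _ Hv).
have below : forall p u, p \in marked -> u \notin marked -> le p u -> lam p <= lam (bot u).
  move=> p u Hp Hu Hpu.
  have Hc : same_component le u p by rewrite same_comp_sym; apply: le_same_comp.
  case: (hMM u p Hc Hp) => Hm.
    have [Hut Ht] := topP u; have [m0 [_ Hu0]] := hU u.
    have E : p = top u by rewrite -(Hu0 _ Hm) (Hu0 _ Ht).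
    move/negP: Hu; case; rewrite (_ : u = p) //; apply: anti; by rewrite Hpu -E in Hut *; rewrite Hut.
  have [Hut Ht] := botP u; have [m0 [_ Hu0]] := hL u.
  by rewrite -(Hu0 _ Hm) (Hu0 _ Ht).
have above : forall p u, p \in marked -> u \notin marked -> le u p -> lam (top u) <= lam p.
  move=> p u Hp Hu Hpu.
  have Hc : same_component le u p by apply: le_same_comp.
  case: (hMM u p Hc Hp) => Hm; last first.
    have [Hut Ht] := botP u; have [m0 [_ Hu0]] := hL u.
    have E : p = bot u by rewrite -(Hu0 _ Hm) (Hu0 _ Ht).
    move/negP: Hu; case; rewrite (_ : u = p) //; apply: anti; by rewrite Hpu -E in Hut *; rewrite Hut.
  have [Hut Ht] := topP u; have [m0 [_ Hu0]] := hU u.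
  by rewrite -(Hu0 _ Hm) (Hu0 _ Ht).
pose ev (i : 'I_#|~: marked|) : P := enum_val i.
have evU : forall i, ev i \notin marked.
  by move=> i; have := enum_valP i; rewrite inE.
pose lo i := lam (bot (ev i)).
pose d i := lam (top (ev i)) - lo i.
have dpos : forall i, 0 < d i by move=> i; rewrite subr_gt0; apply: lt_bt.
have dneq : forall i, d i != 0 by move=> i; rewrite gt_eqF.
have lohi : forall i j, le (ev i) (ev j) -> lo i = lo j /\ d i = d j.
  by move=> i j /comp_tb [E1 E2]; rewrite /d /lo E1 E2.
exists (fun i j => le (ev i) (ev j)); split.
  split => //; last by move=> a b c; apply: trans.
  by move=> a b H; apply: enum_val_inj; apply: anti.
exists (diag_mx (\row_i (d i)^-1)), (\row_i (- lo i / d i)); split.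
  rewrite unitmxE det_diag unitfE; apply/prodf_neq0 => i _.
  by rewrite mxE invr_eq0.
have fE : forall (x : 'rV[R]_#|~: marked|) i,
    (x *m diag_mx (\row_i (d i)^-1) + \row_i (- lo i / d i)) 0 i = (x 0 i - lo i) / d i.
  by move=> x i; rewrite mul_mx_diag !mxE mulrBl mulNr.
have pick_ev : forall i, [pick j | ev j == ev i] = Some i.
  move=> i; case: pickP => [j /eqP /enum_val_inj -> //|/(_ i)].
  by rewrite eqxx.
have pick_m : forall p, p \in marked -> [pick j | ev j == p] = None.
  move=> p Hp; case: pickP => [j /eqP Ej|//].
  by have := evU j; rewrite Ej Hp.
have cases : forall p, p \in marked \/ exists i, ev i = p.
  move=> p; case: (boolP (p \in marked)) => Hp; [by left | right].
  have Hp' : p \in ~: marked by rewrite inE.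
  by exists (enum_rank_in Hp' p); rewrite /ev enum_rankK_in.
move=> yv; split.
  case=> H01 Hmon.
  pose x := \row_i (yv 0 i * d i + lo i).
  exists x; last first.
    by apply/rowP => i; rewrite fE mxE addrK mulfK.
  exists (fun p => oapp (fun i => x 0 i) (lam p) [pick i | ev i == p]).
  split.
  - by move=> p Hp; rewrite pick_m.
  - by move=> i; rewrite pick_ev.
  move=> p q.
  case: (cases p) => [Hp|[i <-]]; case: (cases q) => [Hq|[j <-]] => Hpq.
  - by rewrite !pick_m //=; apply: hmono.
  - rewrite (pick_m _ Hp) pick_ev /= mxE.
    have := below p (ev j) Hp (evU j) Hpq.
    have := H01 j; have := dpos j; rewrite /lo.
    move=> h1 /andP [h2 h3] h4; nra.
  - rewrite (pick_m _ Hq) pick_ev /= mxE.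
    have := above q (ev i) Hq (evU i) Hpq.
    have := H01 i; have := dpos i; rewrite /d /lo.
    move=> h1 /andP [h2 h3] h4; nra.
  - rewrite !pick_ev /= !mxE.
    have [->|nij] := eqVneq i j; first by [].
    have [E1 E2] := lohi i j Hpq.
    have := Hmon i j; rewrite /strict Hpq nij => /(_ isT).
    rewrite E1 E2; have := dpos j; move=> h1 h2; nra.
case=> x [y [Hy1 Hy2 Hy3]] ->; split.
  move=> i; rewrite fE.
  have [Hb _] := botP (ev i); have [Ht _] := topP (ev i).
  have h1 := Hy3 _ _ Hb; have h2 := Hy3 _ _ Ht.
  rewrite Hy2 (Hy1 _ (botM _)) in h1; rewrite Hy2 (Hy1 _ (topM _)) in h2.
  have := dpos i; rewrite /d /lo => h3.
  apply/andP; split.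
    apply: divr_ge0; last exact: ltW. rewrite subr_ge0. exact: h1.
  rewrite ler_pdivrMr // mul1r; lra.
move=> i j /andP [Hl _]; rewrite !fE.
have [E1 E2] := lohi i j Hl.
rewrite E1 E2 ler_pM2r ?invr_gt0 // lerD2r -!Hy2.
exact: Hy3.
Qed.
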